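(* Let $(\mathcal S,\mathcal A,P,r)$ be any finite MDP (general/multichain) and $(g^\star,h^\star)$ a solution of the modified Bellman equations. Let $V^0\in\mathbb R^n$, $0\le\lambda_k<1$ for $k\ge1$, and $V^k=\lambda_kV^0+(1-\lambda_k)TV^{k-1}$ for $k\ge1$ (Anchored Value Iteration). Then for every $k\ge1$, \[\Big\|\frac{V^k-V^0}{\sum_{i=1}^k\prod_{j=i}^k(1-\lambda_j)}-g^\star\Big\|_\infty\le\frac{2(1-\lambda_k)}{\sum_{i=1}^k\prod_{j=i}^k(1-\lambda_j)}\|V^0-h^\star\|_\infty.\]
   Context: An MDP $(\mathcal S,\mathcal A,P,r)$ has finite state space $\mathcal S$ ($|\mathcal S|=n$, functions identified with $\mathbb R^n$), finite action space, transition probabilities $P(s'\mid s,a)$ and bounded reward $r$. The Bellman optimality operator is $(TV)(s)=\max_a\{r(s,a)+\sum_{s'}P(s'\mid s,a)V(s')\}$. $g^\star(s)=\max_\pi\liminf_{T\to\infty}\frac1T\mathbb E_\pi[\sum_{t=0}^{T-1}r(s_t,a_t)\mid s_0=s]$. A pair $(g,h)$ solves the modified Bellman equations if $\max_a\sum_{s'}P(s'\mid s,a)g(s')=g(s)$ and $\max_a\{r(s,a)+\sum_{s'}P(s'\mid s,a)h(s')\}=h(s)+g(s)$ for all $s$, with some policy attaining both maxima simultaneously; the first component of any solution equals $g^\star$. *)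

(* Defs.v *)
From mathcomp Require Import all_boot all_order all_algebra.
Set Implicit Arguments. Unset Strict Implicit. Unset Printing Implicit Defensive.
Import Order.TTheory GRing.Theory Num.Theory.
Local Open Scope ring_scope.

Section MDP.
Variables (R : realFieldType) (S A : finType).

(* maximum of F over the (nonempty) finite action set A; 0 if A is empty *)
Definition fmax (F : A -> R) : R :=
  match [pick a : A] with
  | Some a0 => \big[Num.max/F a0]_(a : A) F a
  | None => 0
  end.

Definition supnorm (v : S -> R) : R := \big[Num.max/0]_(s : S) `|v s|.

(* P s a s' = P(s' | s, a) is a transition kernel *)
Definition is_kernel (P : S -> A -> S -> R) : Prop :=
  (forall s a s', 0 <= P s a s') /\ (forall s a, \sum_(s' : S) P s a s' = 1).

Definition expect (P : S -> A -> S -> R) (s : S) (a : A) (V : S -> R) : R :=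
  \sum_(s' : S) P s a s' * V s'.

Definition bellman (P : S -> A -> S -> R) (r : S -> A -> R) (V : S -> R) : S -> R :=
  fun s => fmax (fun a => r s a + expect P s a V).

Definition modified_bellman (P : S -> A -> S -> R) (r : S -> A -> R)
    (g h : S -> R) : Prop :=
  [/\ (forall s, fmax (fun a => expect P s a g) = g s),
      (forall s, fmax (fun a => r s a + expect P s a h) = h s + g s) &
      exists pi : S -> A, forall s,
        expect P s (pi s) g = g s /\ r s (pi s) + expect P s (pi s) h = h s + g s].

End MDP.

(* Main.v *)
Require Import Defs.
From mathcomp Require Import all_boot all_order all_algebra.
From mathcomp Require Import ring lra.
Import Order.TTheory GRing.Theory Num.Theory.
Local Open Scope ring_scope.

Set Implicit Arguments. Unset Strict Implicit.
Section Aux.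
Variables (R : realFieldType) (S A : finType).

Lemma supnorm_ge (v : S -> R) s : `|v s| <= supnorm v.
Proof. exact: (le_bigmax _ (fun s => `|v s|) s). Qed.

Lemma supnorm_le (v : S -> R) c : 0 <= c -> (forall s, `|v s| <= c) -> supnorm v <= c.
Proof. by move=> c0 H; apply: bigmax_le. Qed.

Lemma fmax_ge (F : A -> R) a : fmax F >= F a.
Proof.
rewrite /fmax; case: pickP => [a0 _|]; last by move=> /(_ a).
exact: (le_bigmax _ F a).
Qed.

Lemma fmax_le (F : A -> R) c : (0 < #|A|)%N -> (forall a, F a <= c) -> fmax F <= c.
Proof.
move=> HA H; rewrite /fmax; case: pickP => [a0 _|].
  by apply: bigmax_le.
by move=> H0; case/card_gt0P: HA => x _; have := H0 x.
Qed.

Variables (P : S -> A -> S -> R) (r : S -> A -> R).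
Hypothesis HA : (0 < #|A|)%N.
Hypothesis HP : is_kernel P.

Lemma expect_lin s a (U W : S -> R) t :
  expect P s a (fun x => U x + t * W x) = expect P s a U + t * expect P s a W.
Proof.
rewrite /expect mulr_sumr -big_split /=; apply: eq_bigr => i _; ring.
Qed.

Lemma expect_diff s a (U W : S -> R) :
  expect P s a U - expect P s a W <= supnorm (fun x => U x - W x).
Proof.
case: HP => P0 P1.
rewrite /expect -sumrB.
apply: (@le_trans _ _ (\sum_s' P s a s' * supnorm (fun x => U x - W x))).
  apply: ler_sum => i _; rewrite -mulrBr; apply: ler_wpM2l => //.
  apply: le_trans (supnorm_ge (fun x => U x - W x) i); exact: ler_norm.
by rewrite -mulr_suml P1 mul1r.
Qed.

Lemma bellman_half (U W : S -> R) s :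
  bellman P r U s <= bellman P r W s + supnorm (fun x => U x - W x).
Proof.
rewrite /bellman; apply: fmax_le => // a.
have := fmax_ge (fun a => r s a + expect P s a W) a.
have := expect_diff s a U W. move=> /= H1 H2. lra.
Qed.

Lemma bellman_nonexp (U W : S -> R) s :
  `|bellman P r U s - bellman P r W s| <= supnorm (fun x => U x - W x).
Proof.
have H1 := bellman_half U W s.
have H2 := bellman_half W U s.
have E : supnorm (fun x => W x - U x) = supnorm (fun x => U x - W x).
  by rewrite /supnorm; apply: eq_bigr => i _; rewrite distrC.
rewrite E in H2; rewrite ler_norml; apply/andP; split; lra.
Qed.

Lemma bellman_affine g h t s : modified_bellman P r g h -> 0 <= t ->
  bellman P r (fun x => h x + t * g x) s = h s + (t + 1) * g s.
Proof.
case=> Hg Hh [pi Hpi] t0; rewrite /bellman; apply/le_anti/andP; split.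
  apply: fmax_le => // a; rewrite expect_lin.
  have := fmax_ge (fun a => expect P s a g) a.
  have := fmax_ge (fun a => r s a + expect P s a h) a.
  rewrite Hg Hh /= => H1 H2.
  have : t * expect P s a g <= t * g s by apply: ler_wpM2l.
  lra.
apply: le_trans (fmax_ge _ (pi s)); rewrite expect_lin.
case: (Hpi s) => E1 E2.
have -> : r s (pi s) + (expect P s (pi s) h + t * expect P s (pi s) g)
   = (r s (pi s) + expect P s (pi s) h) + t * expect P s (pi s) g by ring.
rewrite E1 E2 mulrDl mul1r; lra.
Qed.

End Aux.
Unset Implicit Arguments. Set Strict Implicit.

Definition Dn {R : realFieldType} (lam : nat -> R) k :=
  \sum_(1 <= i < k.+1) \prod_(i <= j < k.+1) (1 - lam j).

Lemma Dn0 (R : realFieldType) (lam : nat -> R) : Dn lam 0 = 0.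
Proof. by rewrite /Dn big_geq. Qed.

Lemma DnS (R : realFieldType) (lam : nat -> R) k :
  Dn lam k.+1 = (1 - lam k.+1) * (1 + Dn lam k).
Proof.
rewrite /Dn big_nat_recr //= big_nat1.
have -> : \sum_(1 <= i < k.+1) \prod_(i <= j < k.+2) (1 - lam j)
    = \sum_(1 <= i < k.+1) (\prod_(i <= j < k.+1) (1 - lam j)) * (1 - lam k.+1).
  by apply: eq_big_nat => i /andP [_ Hi]; rewrite big_nat_recr //= ltnW.
rewrite -mulr_suml; ring.
Qed.

Lemma Dn_ge0 (R : realFieldType) (lam : nat -> R) :
  (forall k, (1 <= k)%N -> 0 <= lam k < 1) -> forall k, 0 <= Dn lam k.
Proof.
move=> Hl; elim=> [|k IH]; first by rewrite Dn0.
rewrite DnS; case/andP: (Hl k.+1 isT) => _ H1; apply: mulr_ge0; lra.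
Qed.

Theorem theorem9 (R : realFieldType) (S A : finType)
  (P : S -> A -> S -> R) (r : S -> A -> R) (g h : S -> R)
  (V0 : S -> R) (lam : nat -> R) (V : nat -> S -> R) :
  (0 < #|A|)%N ->
  is_kernel P ->
  modified_bellman P r g h ->
  (forall k, (1 <= k)%N -> 0 <= lam k < 1) ->
  V 0%N = V0 ->
  (forall k, (1 <= k)%N ->
     V k = (fun s => lam k * V0 s + (1 - lam k) * bellman P r (V k.-1) s)) ->
  forall k, (1 <= k)%N ->
    let D := \sum_(1 <= i < k.+1) \prod_(i <= j < k.+1) (1 - lam j) in
    supnorm (fun s => (V k s - V0 s) / D - g s)
      <= 2 * (1 - lam k) / D * supnorm (fun s => V0 s - h s).
Proof.
move=> HA HP HB Hl HV0 HV k Hk; cbv zeta.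
set e := supnorm (fun s => V0 s - h s).
have e0 : 0 <= e.
  rewrite /e /supnorm; apply: (big_ind (fun x => 0 <= x)) => // x y hx hy.
  by rewrite le_max hx.
pose Z n := fun s => h s + Dn lam n * g s.
have HZ : forall n s, bellman P r (Z n) s = h s + (Dn lam n + 1) * g s.
  by move=> n s; apply: bellman_affine => //; apply: Dn_ge0.
have Hind : forall n s, `|V n s - Z n s| <= e.
  elim=> [|n IH] s.
    rewrite /Z HV0 Dn0 mul0r addr0; exact: (supnorm_ge (fun s => V0 s - h s) s).
  have HN : supnorm (fun x => V n x - Z n x) <= e by apply: supnorm_le.
  have HT := bellman_nonexp r HA HP (V n) (Z n) s.
  have E : V n.+1 s - Z n.+1 s
      = lam n.+1 * (V0 s - h s) + (1 - lam n.+1) * (bellman P r (V n) s - bellman P r (Z n) s).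
    rewrite HV // /Z HZ DnS /=; ring.
  rewrite E; case/andP: (Hl n.+1 isT) => l0 l1.
  have c0 : 0 <= 1 - lam n.+1 by lra.
  apply: le_trans (ler_normD _ _) _; rewrite !normrM (ger0_norm l0) (ger0_norm c0).
  have := supnorm_ge (fun s => V0 s - h s) s; rewrite -/e /= => H1.
  have H2 : `|bellman P r (V n) s - bellman P r (Z n) s| <= e by lra.
  have : lam n.+1 * `|V0 s - h s| <= lam n.+1 * e by apply: ler_wpM2l.
  have : (1 - lam n.+1) * `|bellman P r (V n) s - bellman P r (Z n) s| <= (1 - lam n.+1) * e.
    by apply: ler_wpM2l => //; lra.
  lra.
case: k Hk => // k _.
set D := \sum_(1 <= i < k.+2) _.
have DE : D = Dn lam k.+1 by [].
case/andP: (Hl k.+1 isT) => l0 l1.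
have Dpos : 0 < D by rewrite DE DnS; apply: mulr_gt0; have := Dn_ge0 _ _ Hl k; lra.
apply: supnorm_le.
  apply: mulr_ge0 => //; apply: divr_ge0 => //; [lra | exact: ltW].
move=> s.
have E : (V k.+1 s - V0 s) / D - g s
   = (1 - lam k.+1) * ((h s - V0 s) + (bellman P r (V k) s - bellman P r (Z k) s)) / D.
  rewrite HV // HZ DE DnS /=; field.
  have := Dn_ge0 _ _ Hl k; move=> H0; apply/andP; split; apply: lt0r_neq0; lra.
have c0 : 0 <= 1 - lam k.+1 by lra.
have HX : `|(h s - V0 s) + (bellman P r (V k) s - bellman P r (Z k) s)| <= 2 * e.
  apply: le_trans (ler_normD _ _) _.
  have H1 : `|h s - V0 s| <= e.
    by rewrite distrC; exact: (supnorm_ge (fun s => V0 s - h s) s).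
  have HN : supnorm (fun x => V k x - Z k x) <= e by apply: supnorm_le.
  have := bellman_nonexp r HA HP (V k) (Z k) s.
  lra.
rewrite E normrM normfV (gtr0_norm Dpos) normrM (ger0_norm c0).
have -> : 2 * (1 - lam k.+1) / D * e = (1 - lam k.+1) * (2 * e) / D by ring.
apply: ler_wpM2r; first by rewrite invr_ge0 ltW.
exact: ler_wpM2l.
Qed.
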